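(* Let $\varphi(x)$ be a first-order formula over a finite modal signature, of quantifier rank $q$, and suppose $\varphi$ is invariant under graded bisimulation $\sim_{\mathrm{C}}$ over the class of all pointed Kripke structures (respectively, over the class of all finite pointed Kripke structures) of this signature. Then, with $\ell=2^q-1$, there is $c\in\mathbb{N}$ such that $\varphi$ is invariant under $\sim_{\mathrm{C}}^{c,\ell}$ over the class of all pointed Kripke structures (respectively, over the class of all finite pointed Kripke structures): whenever $\mathcal{M},w\sim_{\mathrm{C}}^{c,\ell}\mathcal{M}',w'$ (both finite in the respective case), $\mathcal{M}\models\varphi[w]\iff\mathcal{M}'\models\varphi[w']$.
   Context: A finite modal signature consists of a finite set $I$ of agents and a finite set $J$ of basic propositions. A Kripke structure is $\mathcal{M}=(W,(E_i)_{i\in I},(P_j)_{j\in J})$ with $W\neq\emptyset$, $E_i\subseteq W\times W$, $P_j\subseteq W$, viewed as a relational structure; it is finite if $W$ is finite. A pointed Kripke structure $\mathcal{M},w$ has a distinguished world $w$, and $\varphi(x)$ is evaluated by assigning $w$ to $x$. $E_i[u]=\{v:(u,v)\in E_i\}$. A graded bisimulation between $\mathcal{M}$ and $\mathcal{M}'=(W',(E'_i),(P'_j))$ is a non-empty relation $Z\subseteq W\times W'$ such that for all $(u,u')\in Z$: (atom equivalence) $u\in P_j\iff u'\in P'_j$ for all $j$; (graded forth) for every $i$ and $k\ge1$ and pairwise distinct $v_1,\dots,v_k\in E_i[u]$ there are pairwise distinct $v'_1,\dots,v'_k\in E'_i[u']$ with $(v_m,v'_m)\in Z$ for all $m$; (graded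 back) symmetrically. $\mathcal{M},w\sim_{\mathrm{C}}\mathcal{M}',w'$ if such $Z$ exists with $(w,w')\in Z$. The $c$-graded $\ell$-round game on $\mathcal{M},\mathcal{M}'$ from $(w,w')$: positions are pairs $(u,u')\in W\times W'$. In each round from $(u,u')$, player I chooses an agent $i$ and a non-empty subset $s$ of $E_i[u]$ or of $E_i'[u']$ of size at most $c$; player II must respond with a subset $s'$ of the same size of the corresponding set on the other side; then I picks a world in $s'$ and II answers by picking a world in $s$; the pair of these two worlds is the new position. A player unable to move loses; II also loses as soon as a position $(v,v')$ (including the initial one) violates atom equivalence ($v\in P_j\not\Leftrightarrow v'\in P'_j$ for some $j$). $\mathcal{M},w\sim_{\mathrm{C}}^{c,\ell}\mathcal{M}',w'$ means II has a winning strategy for the $\ell$ rounds of this game from $(w,w')$. *)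

(* Defs.v *)
From Stdlib Require Import List Arith.
Import ListNotations.

Set Implicit Arguments.

Definition finite_type (T : Type) : Prop := exists l : list T, forall x : T, In x l.

Record kripke (I J : Type) := Kripke {
  world : Type;
  world_inhabited : inhabited world;
  edge : I -> world -> world -> Prop;
  prop : J -> world -> Prop
}.
Arguments world {I J}.
Arguments edge {I J}.
Arguments prop {I J}.

Definition finite_kripke {I J} (M : kripke I J) : Prop := finite_type (world M).

Inductive fo (I J : Type) : Type :=
| FEq   : nat -> nat -> fo I J
| FRel  : I -> nat -> nat -> fo I J
| FPred : J -> nat -> fo I J
| FNot  : fo I J -> fo I J
| FAnd  : fo I J -> fo I J -> fo I J
| FOr   : fo I J -> fo I J -> fo I J
| FEx   : nat -> fo I J -> fo I J
| FAll  : nat -> fo I J -> fo I J.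
Arguments FEq {I J}. Arguments FRel {I J}. Arguments FPred {I J}.
Arguments FNot {I J}. Arguments FAnd {I J}. Arguments FOr {I J}.
Arguments FEx {I J}. Arguments FAll {I J}.

Fixpoint qrank {I J} (f : fo I J) : nat :=
  match f with
  | FEq _ _ | FRel _ _ _ | FPred _ _ => 0
  | FNot g => qrank g
  | FAnd g h | FOr g h => Nat.max (qrank g) (qrank h)
  | FEx _ g | FAll _ g => S (qrank g)
  end.

Fixpoint fv_in {I J} (ok : nat -> Prop) (f : fo I J) : Prop :=
  match f with
  | FEq x y => ok x /\ ok y
  | FRel _ x y => ok x /\ ok y
  | FPred _ x => ok x
  | FNot g => fv_in ok g
  | FAnd g h | FOr g h => fv_in ok g /\ fv_in ok h
  | FEx x g | FAll x g => fv_in (fun y => y = x \/ ok y) g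
  end.

(** phi(x): the only free variable is x, which we take to be variable 0. *)
Definition one_free_var {I J} (f : fo I J) : Prop := fv_in (fun y => y = 0) f.

Definition upd {W : Type} (g : nat -> W) (x : nat) (v : W) : nat -> W :=
  fun y => if Nat.eqb y x then v else g y.

Fixpoint sat {I J} (M : kripke I J) (g : nat -> world M) (f : fo I J) : Prop :=
  match f with
  | FEq x y => g x = g y
  | FRel i x y => edge M i (g x) (g y)
  | FPred j x => prop M j (g x)
  | FNot h => ~ sat M g h
  | FAnd h k => sat M g h /\ sat M g k
  | FOr h k => sat M g h \/ sat M g k
  | FEx x h => exists v : world M, sat M (upd g x v) h
  | FAll x h => forall v : world M, sat M (upd g x v) h
  end.

Definition holds_at {I J} (M : kripke I J) (w : world M) (f : fo I J) : Prop :=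
  sat M (fun _ => w) f.

Definition atom_eq {I J} (M M' : kripke I J) (u : world M) (u' : world M') : Prop :=
  forall j : J, prop M j u <-> prop M' j u'.

(** A finite set of k pairwise distinct successors, as a duplicate-free list. *)
Definition succ_set {I J} (M : kripke I J) (i : I) (u : world M) (s : list (world M)) : Prop :=
  NoDup s /\ forall v, In v s -> edge M i u v.

Definition graded_bisim {I J} (M M' : kripke I J) (Z : world M -> world M' -> Prop) : Prop :=
  (exists u u', Z u u') /\
  forall u u', Z u u' ->
    atom_eq M M' u u' /\
    (forall (i : I) (vs : list (world M)), 1 <= length vs -> succ_set M i u vs ->
       exists vs', succ_set M' i u' vs' /\ Forall2 Z vs vs') /\
    (forall (i : I) (vs' : list (world M')), 1 <= length vs' -> succ_set M' i u' vs' ->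
       exists vs, succ_set M i u vs /\ Forall2 Z vs vs').

Definition bisimilar {I J} (M : kripke I J) (w : world M) (M' : kripke I J) (w' : world M') : Prop :=
  exists Z, graded_bisim M M' Z /\ Z w w'.

(** [II_wins c l M M' u u']: player II has a winning strategy in the
    c-graded l-round game from position (u,u'). *)
Fixpoint II_wins {I J} (c l : nat) (M M' : kripke I J) (u : world M) (u' : world M') : Prop :=
  atom_eq M M' u u' /\
  match l with
  | 0 => True
  | S l' =>
      (* I chooses s in E_i[u]; II answers s' in E'_i[u']; I picks v' in s',
         II answers v in s. *)
      (forall (i : I) (s : list (world M)),
          1 <= length s -> length s <= c -> succ_set M i u s ->
          exists s' : list (world M'),
            succ_set M' i u' s' /\ length s' = length s /\
            forall v', In v' s' -> exists v, In v s /\ II_wins c l' M M' v v') /\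
      (* I chooses s in E'_i[u']; II answers s' in E_i[u]; I picks v in s',
         II answers v' in s. *)
      (forall (i : I) (s : list (world M')),
          1 <= length s -> length s <= c -> succ_set M' i u' s ->
          exists s' : list (world M),
            succ_set M i u s' /\ length s' = length s /\
            forall v, In v s' -> exists v', In v' s /\ II_wins c l' M M' v v')
  end.

Definition game_equiv {I J} (c l : nat) (M : kripke I J) (w : world M) (M' : kripke I J) (w' : world M') : Prop :=
  II_wins c l M M' w w'.

Definition invariant_bisim {I J} (K : kripke I J -> Prop) (f : fo I J) : Prop :=
  forall (M M' : kripke I J) (w : world M) (w' : world M'),
    K M -> K M' -> bisimilar M w M' w' -> (holds_at M w f <-> holds_at M' w' f).

Definition invariant_game {I J} (K : kripke I J -> Prop) (c l : nat) (f : fo I J) : Prop :=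
  forall (M M' : kripke I J) (w : world M) (w' : world M'),
    K M -> K M' -> game_equiv c l M w M' w' -> (holds_at M w f <-> holds_at M' w' f).

(* Main.v *)
Require Import Defs.
From Stdlib Require Import List Arith Lia ClassicalEpsilon FunctionalExtensionality Eqdep_dec Bool.
Import ListNotations.

Definition decP (P : Prop) : bool := if excluded_middle_informative P then true else false.
Lemma decP_true P : decP P = true <-> P.
Proof. unfold decP; destruct (excluded_middle_informative P); split; intros; auto; discriminate. Qed.
Definition cdec {X : Type} (x y : X) : {x = y} + {x <> y} := excluded_middle_informative (x = y).

Lemma pigeon {X Y : Type} (R : X -> Y -> Prop) (l : list X) (F : list Y) :
  NoDup l -> (forall x, In x l -> exists y, In y F /\ R x y) ->
  (forall x1 x2 y, In x1 l -> In x2 l -> R x1 y -> R x2 y -> x1 = x2) ->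
  length l <= length F.
Proof.
  revert F. induction l as [|x l IH]; intros F Hnd Hex Hinj; simpl; [lia|].
  inversion Hnd; subst.
  destruct (Hex x (or_introl eq_refl)) as [y [Hy Rxy]].
  assert (Hlt := remove_length_lt cdec F y Hy).
  enough (length l <= length (remove cdec y F)) by lia.
  apply IH; auto.
  - intros x' Hx'. destruct (Hex x' (or_intror Hx')) as [y' [Hy' R']].
    exists y'; split; auto. apply in_in_remove; auto.
    intro; subst y'. assert (x' = x) by (apply (Hinj x' x y); simpl; auto). subst; contradiction.
  - intros; eapply Hinj; simpl; eauto.
Qed.

Lemma NoDup_map_on {X Y} (f : X -> Y) (l : list X) :
  NoDup l -> (forall a b, In a l -> In b l -> f a = f b -> a = b) -> NoDup (map f l).
Proof.
  induction l as [|a l IH]; intros Hnd Hinj; simpl; constructor.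
  - inversion Hnd; subst. intro Hin. apply in_map_iff in Hin as [b [Hb Hbin]].
    assert (b = a) by (apply Hinj; simpl; auto). subst; contradiction.
  - inversion Hnd; subst. apply IH; auto. intros; apply Hinj; simpl; auto.
Qed.

Section Gen.
Context {I J : Type}.

Lemma fv_mono (f : fo I J) : forall (ok ok' : nat -> Prop),
  (forall y, ok y -> ok' y) -> fv_in ok f -> fv_in ok' f.
Proof.
  induction f; simpl; intros ok ok' Hs H.
  1-3: firstorder.
  - eauto.
  - destruct H; split; eauto.
  - destruct H; split; eauto.
  - eapply IHf; [|exact H]. intros y [->|Hy]; auto.
  - eapply IHf; [|exact H]. intros y [->|Hy]; auto.
Qed.

Definition atoms_ok (A B : kripke I J) (L : list nat) (g : nat -> world A) (g' : nat -> world B) :=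
  (forall x y, In x L -> In y L -> (g x = g y <-> g' x = g' y) /\
      forall i, edge A i (g x) (g y) <-> edge B i (g' x) (g' y)) /\
  (forall x, In x L -> atom_eq A B (g x) (g' x)).

Definition EFrel (A B : kripke I J) (R : nat -> list nat -> (nat -> world A) -> (nat -> world B) -> Prop) :=
  forall k L g g', R k L g g' -> atoms_ok A B L g g' /\
    forall k', k = S k' ->
    (forall z a, exists b, R k' (z::L) (upd g z a) (upd g' z b)) /\
    (forall z b, exists a, R k' (z::L) (upd g z a) (upd g' z b)).

Lemma EF_sound A B R : EFrel A B R -> forall (f : fo I J) k L g g', R k L g g' ->
  fv_in (fun y => In y L) f -> qrank f <= k -> (sat A g f <-> sat B g' f).
Proof.
  intros HR f. induction f; intros k L g g' Hr Hfv Hq; simpl in *;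
    destruct (HR _ _ _ _ Hr) as [[Hat Hpr] Hstep].
  - destruct Hfv. apply (Hat n n0); auto.
  - destruct Hfv. apply (Hat n n0); auto.
  - apply Hpr; auto.
  - rewrite (IHf k L g g'); tauto.
  - destruct Hfv. rewrite (IHf1 k L g g'), (IHf2 k L g g'); auto; try tauto; lia.
  - destruct Hfv. rewrite (IHf1 k L g g'), (IHf2 k L g g'); auto; try tauto; lia.
  - destruct k as [|k']; [lia|]. destruct (Hstep k' eq_refl) as [Hf Hb].
    assert (Hfv' : fv_in (fun y => In y (n :: L)) f).
    { eapply fv_mono; [|exact Hfv]. intros y [->|Hy]; simpl; auto. }
    split; intros [v Hv].
    + destruct (Hf n v) as [b Hb']. exists b. eapply IHf; eauto; lia.
    + destruct (Hb n v) as [a Ha']. exists a. eapply IHf; eauto; lia.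
  - destruct k as [|k']; [lia|]. destruct (Hstep k' eq_refl) as [Hf Hb].
    assert (Hfv' : fv_in (fun y => In y (n :: L)) f).
    { eapply fv_mono; [|exact Hfv]. intros y [->|Hy]; simpl; auto. }
    split; intros Hv v.
    + destruct (Hb n v) as [a Ha']. eapply IHf; eauto; lia.
    + destruct (Hf n v) as [b Hb']. eapply IHf; eauto; lia.
Qed.

Lemma II_atom c n (M M' : kripke I J) u u' : II_wins c n M M' u u' -> atom_eq M M' u u'.
Proof. destruct n; simpl; tauto. Qed.

Lemma II_sym c n : forall (M M' : kripke I J) u u', II_wins c n M M' u u' -> II_wins c n M' M u' u.
Proof.
  induction n; simpl; intros M M' u u' [Ha H]; (split; [intro j; specialize (Ha j); tauto|]); auto.
  destruct H as [Hf Hb]. split.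
  - intros i s H1 H2 H3. destruct (Hb i s H1 H2 H3) as [s' [Hs1 [Hs2 Hs3]]].
    exists s'; split; [auto|split; [auto|]]. intros v Hv. destruct (Hs3 v Hv) as [v' [? ?]]. eauto.
  - intros i s H1 H2 H3. destruct (Hf i s H1 H2 H3) as [s' [Hs1 [Hs2 Hs3]]].
    exists s'; split; [auto|split; [auto|]]. intros v Hv. destruct (Hs3 v Hv) as [v' [? ?]]. eauto.
Qed.

Lemma II_trans c n : forall (M1 M2 M3 : kripke I J) u1 u2 u3,
  II_wins c n M1 M2 u1 u2 -> II_wins c n M2 M3 u2 u3 -> II_wins c n M1 M3 u1 u3.
Proof.
  induction n; simpl; intros M1 M2 M3 u1 u2 u3 [Ha H] [Ha' H'];
    (split; [intro j; specialize (Ha j); specialize (Ha' j); tauto|]); auto.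
  destruct H as [Hf Hb], H' as [Hf' Hb']. split.
  - intros i s H1 H2 H3. destruct (Hf i s H1 H2 H3) as [s2 [Hs1 [Hs2 Hs3]]].
    destruct (Hf' i s2 ltac:(lia) ltac:(lia) Hs1) as [s3 [Ht1 [Ht2 Ht3]]].
    exists s3; split; [auto|split; [lia|]]. intros v3 Hv3.
    destruct (Ht3 v3 Hv3) as [v2 [Hv2 Hw2]]. destruct (Hs3 v2 Hv2) as [v1 [Hv1 Hw1]].
    exists v1; split; eauto.
  - intros i s H1 H2 H3. destruct (Hb' i s H1 H2 H3) as [s2 [Hs1 [Hs2 Hs3]]].
    destruct (Hb i s2 ltac:(lia) ltac:(lia) Hs1) as [s1 [Ht1 [Ht2 Ht3]]].
    exists s1; split; [auto|split; [lia|]]. intros v1 Hv1.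
    destruct (Ht3 v1 Hv1) as [v2 [Hv2 Hw2]]. destruct (Hs3 v2 Hv2) as [v3 [Hv3 Hw3]].
    exists v3; split; eauto.
Qed.

Lemma Forall2_comp {X Y Z : Type} (R1 : X -> Y -> Prop) (R2 : Y -> Z -> Prop) l1 l2 l3 :
  Forall2 R1 l1 l2 -> Forall2 R2 l2 l3 -> Forall2 (fun x z => exists y, R1 x y /\ R2 y z) l1 l3.
Proof.
  intros H; revert l3; induction H; intros l3 H'; inversion H'; subst; constructor; eauto.
Qed.

Lemma Forall2_length' {X Y : Type} (R : X -> Y -> Prop) l1 l2 : Forall2 R l1 l2 -> length l1 = length l2.
Proof. induction 1; simpl; auto. Qed.

Lemma Forall2_flip' {X Y : Type} (R : X -> Y -> Prop) l1 l2 :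
  Forall2 R l1 l2 -> Forall2 (fun y x => R x y) l2 l1.
Proof. induction 1; constructor; auto. Qed.

Lemma bisim_trans (M1 M2 M3 : kripke I J) w1 w2 w3 :
  bisimilar M1 w1 M2 w2 -> bisimilar M2 w2 M3 w3 -> bisimilar M1 w1 M3 w3.
Proof.
  intros [Z1 [[_ H1] Hw1]] [Z2 [[_ H2] Hw2]].
  exists (fun x z => exists y, Z1 x y /\ Z2 y z). split; [|eauto].
  split; [eauto|]. intros u u3 [u2 [Hz1 Hz2]].
  destruct (H1 _ _ Hz1) as [Ha1 [Hf1 Hb1]]. destruct (H2 _ _ Hz2) as [Ha2 [Hf2 Hb2]].
  split; [intro j; specialize (Ha1 j); specialize (Ha2 j); tauto|]. split.
  - intros i vs Hl Hs. destruct (Hf1 i vs Hl Hs) as [vs2 [Hs2 F2]].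
    pose proof (Forall2_length' _ _ _ F2).
    destruct (Hf2 i vs2 ltac:(lia) Hs2) as [vs3 [Hs3 F3]].
    exists vs3; split; auto. eapply Forall2_comp; eauto.
  - intros i vs3 Hl Hs. destruct (Hb2 i vs3 Hl Hs) as [vs2 [Hs2 F2]].
    pose proof (Forall2_length' _ _ _ F2).
    destruct (Hb1 i vs2 ltac:(lia) Hs2) as [vs1 [Hs1 F1]].
    exists vs1; split; auto. eapply Forall2_comp; eauto.
Qed.

Lemma bisim_sym (M1 M2 : kripke I J) w1 w2 : bisimilar M1 w1 M2 w2 -> bisimilar M2 w2 M1 w1.
Proof.
  intros [Z [[[a [b Hab]] H] Hw]]. exists (fun y x => Z x y). split; auto.
  split; [eauto|]. intros u u' Hz. destruct (H _ _ Hz) as [Ha [Hf Hb]].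
  split; [intro j; specialize (Ha j); tauto|]. split.
  - intros i vs Hl Hs. destruct (Hb i vs Hl Hs) as [vs' [? F]]. exists vs'; split; auto.
    apply Forall2_flip'; auto.
  - intros i vs Hl Hs. destruct (Hf i vs Hl Hs) as [vs' [? F]]. exists vs'; split; auto.
    apply Forall2_flip'; auto.
Qed.

Definition adj (N : kripke I J) (x y : world N) := exists i, edge N i x y \/ edge N i y x.
Inductive walk (N : kripke I J) : world N -> world N -> nat -> Prop :=
| wrefl x : walk N x x 0
| wstep x y z n : adj N x y -> walk N y z n -> walk N x z (S n).
Definition near (N : kripke I J) n x y := exists m, m <= n /\ walk N x y m.

Lemma walk_app N x y z n m : walk N x y n -> walk N y z m -> walk N x z (n + m).
Proof. induction 1; simpl; intros; auto. econstructor; eauto. Qed.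
Lemma walk_snoc N x y z n : walk N x y n -> adj N y z -> walk N x z (S n).
Proof. intros H Ha. replace (S n) with (n + 1) by lia. eapply walk_app; eauto. econstructor; eauto. constructor. Qed.
Lemma walk_sym N x y n : walk N x y n -> walk N y x n.
Proof.
  induction 1; [constructor|]. eapply walk_snoc; eauto.
  destruct H as [i [? | ?]]; exists i; auto.
Qed.
Lemma near_sym N n x y : near N n x y -> near N n y x.
Proof. intros [m [? ?]]; exists m; split; auto; apply walk_sym; auto. Qed.
Lemma near_trans N n m x y z : near N n x y -> near N m y z -> near N (n + m) x z.
Proof. intros [a [? ?]] [b [? ?]]; exists (a + b); split; [lia|]; eapply walk_app; eauto. Qed.
Lemma near_mono N n m x y : n <= m -> near N n x y -> near N m x y.
Proof. intros ? [a [? ?]]; exists a; split; auto; lia. Qed.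
Lemma near_refl N n x : near N n x x.
Proof. exists 0; split; [lia|constructor]. Qed.
Lemma near_edge N n i x y : 1 <= n -> edge N i x y -> near N n x y.
Proof. intros ? He; exists 1; split; auto. econstructor; [exists i; left; eauto| constructor]. Qed.

End Gen.

Section Paths.
Context {I J : Type}.

Fixpoint validp (M : kripke I J) (v : world M) (p : list (I * world M)) : Prop :=
  match p with [] => True | (i, u) :: r => edge M i v u /\ validp M u r end.
Fixpoint lastw (M : kripke I J) (v : world M) (p : list (I * world M)) : world M :=
  match p with [] => v | (i, u) :: r => lastw M u r end.

Lemma validp_snoc M v p i u : validp M v (p ++ [(i,u)]) <-> validp M v p /\ edge M i (lastw M v p) u.
Proof. revert v; induction p as [|[j x] p IH]; intros v; simpl; [tauto|]. rewrite IH; tauto. Qed.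
Lemma lastw_snoc M v p i u : lastw M v (p ++ [(i,u)]) = u.
Proof. revert v; induction p as [|[j x] p IH]; intros v; simpl; auto. Qed.

Definition Hvalid (c ell : nat) (M M' : kripke I J) (w : world M) (w' : world M')
  (H : list (list (I * world M) * list (I * world M'))) : Prop :=
  In ([],[]) H /\
  (forall p p1 p2, In (p,p1) H -> In (p,p2) H -> p1 = p2) /\
  (forall p1 p2 p', In (p1,p') H -> In (p2,p') H -> p1 = p2) /\
  (forall p i u p', In (p ++ [(i,u)], p') H -> exists p0' u', p' = p0' ++ [(i,u')] /\ In (p, p0') H) /\
  (forall p p' i u', In (p, p' ++ [(i,u')]) H -> exists p0 u, p = p0 ++ [(i,u)] /\ In (p0, p') H) /\
  (forall p p', In (p,p') H -> length p = length p' /\ length p <= ell /\ validp M w p /\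
      validp M' w' p' /\ II_wins c (ell - length p) M M' (lastw M w p) (lastw M' w' p')).

Definition swp {X Y : Type} (pr : X * Y) : Y * X := (snd pr, fst pr).

Lemma in_swp {X Y : Type} (a : X) (b : Y) H : In (b, a) (map swp H) <-> In (a, b) H.
Proof.
  rewrite in_map_iff. split.
  - intros [[x y] [E Hin]]. unfold swp in E; simpl in E. inversion E; subst; auto.
  - intros Hin. exists (a,b); auto.
Qed.

Lemma Hvalid_swap c ell M M' w w' H : Hvalid c ell M M' w w' H -> Hvalid c ell M' M w' w (map swp H).
Proof.
  intros [H0 [Hf [Hi [Hc1 [Hc2 Hd]]]]]. unfold Hvalid. setoid_rewrite in_swp.
  split; [auto|]. split; [eauto|]. split; [eauto|]. split.
  { intros p i u p' Hin. destruct (Hc2 _ _ _ _ Hin) as [p0 [u0 [? ?]]]; eauto. }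
  split.
  { intros p p' i u' Hin. destruct (Hc1 _ _ _ _ Hin) as [p0 [u0 [? ?]]]; eauto. }
  intros p p' Hin. destruct (Hd _ _ Hin) as [E [? [? [? Hw]]]].
  split; [lia|]. split; [lia|]. split; [auto|]. split; [auto|].
  rewrite <- E. apply II_sym; auto.
Qed.

Lemma ext_child c ell M M' w w' H p p' i u :
  Hvalid c ell M M' w w' H -> In (p,p') H -> length p < ell -> edge M i (lastw M w p) u ->
  length H + 1 <= c ->
  exists H', Hvalid c ell M M' w w' H' /\ incl H H' /\ length H' <= length H + 1 /\
    exists p2', In (p ++ [(i,u)], p2') H'.
Proof.
  intros Hv Hpp Hlt He Hc.
  destruct (classic (exists p2', In (p ++ [(i,u)], p2') H)) as [Hex|Hnex].
  { exists H; split; [auto|split; [apply incl_refl|split; [lia|auto]]]. }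
  pose proof Hv as [H0 [Hf [Hi [Hc1 [Hc2 Hd]]]]].
  destruct (Hd _ _ Hpp) as [Elen [_ [Hvp [Hvp' Hw]]]].
  set (n := ell - S (length p)).
  assert (En : ell - length p = S n) by (unfold n; lia).
  rewrite En in Hw. simpl in Hw. destruct Hw as [_ [Hforth _]].
  set (Pr := fun pr : list (I * world M) * list (I * world M') =>
          exists u2, fst pr = p ++ [(i,u2)] /\ II_wins c n M M u2 u).
  set (F := nodup cdec (map (fun pr => snd (last (fst pr) (i,u))) (filter (fun pr => decP (Pr pr)) H))).
  assert (HF : forall u2, In u2 F <-> exists p2', In (p ++ [(i,u2)], p2') H /\ II_wins c n M M u2 u).
  { intros u2. unfold F. rewrite nodup_In, in_map_iff. split.
    - intros [pr [Eu Hin]]. apply filter_In in Hin as [Hin Hd']. apply (proj1 (decP_true _)) in Hd'. unfold Pr in Hd'.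
      destruct Hd' as [u3 [E3 HI3]]. rewrite E3 in Eu. rewrite last_last in Eu. simpl in Eu. subst u3.
      destruct pr as [a b]; simpl in *; subst a. eauto.
    - intros [p2' [Hin HI]]. exists (p ++ [(i,u2)], p2'). simpl. rewrite last_last. split; auto.
      apply filter_In; split; auto. apply decP_true. exists u2; simpl; auto. }
  assert (HFl : length F <= length H).
  { unfold F. etransitivity. apply NoDup_incl_length. apply NoDup_nodup.
    intros x Hx; apply nodup_In in Hx; exact Hx.
    rewrite length_map. apply filter_length_le. }
  assert (HuF : ~ In u F) by (rewrite HF; intros [p2' [? _]]; eauto).
  assert (Hss : succ_set M i (lastw M w p) (u :: F)).
  { split. constructor; auto. apply NoDup_nodup.
    intros v [<-|Hv']; auto. apply HF in Hv' as [p2' [Hin _]].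
    destruct (Hd _ _ Hin) as [_ [_ [Hvv _]]]. apply validp_snoc in Hvv; tauto. }
  destruct (Hforth i (u :: F) ltac:(simpl; lia) ltac:(simpl; lia) Hss) as [s' [[Hnd' Hsucc'] [Hlen' Hres]]].
  assert (Hall : forall v', In v' s' -> II_wins c n M M' u v').
  { intros v' Hv'. destruct (Hres v' Hv') as [v [[Ev|HvF] HI]]; [subst v; auto|].
    apply HF in HvF as [p2x [_ HI2]]. eapply II_trans; [apply II_sym; exact HI2| exact HI]. }
  assert (Hfresh : exists v', In v' s' /\ ~ exists x, In (x, p' ++ [(i,v')]) H).
  { apply NNPP. intro Hno.
    assert (Hle : length s' <= length F).
    { apply (pigeon (fun v' u2 => In (p ++ [(i,u2)], p' ++ [(i,v')]) H)); auto.
      - intros v' Hv'. apply NNPP; intro Hc'. apply Hno. exists v'; split; auto.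
        intros [x Hx]. destruct (Hc2 _ _ _ _ Hx) as [p0 [u2 [Ex Hp0]]]. subst x.
        assert (p0 = p) by (eapply Hi; eauto). subst p0.
        apply Hc'. exists u2; split; auto. apply HF. exists (p' ++ [(i,v')]); split; auto.
        destruct (Hd _ _ Hx) as [_ [_ [_ [_ HIx]]]].
        rewrite length_app in HIx; simpl in HIx. replace (ell - (length p + 1)) with n in HIx by (unfold n; lia).
        rewrite !lastw_snoc in HIx.
        eapply II_trans; [exact HIx| apply II_sym; apply Hall; auto].
      - intros x1 x2 y Hx1 Hx2 R1 R2. pose proof (Hf _ _ _ R1 R2) as E.
        apply app_inj_tail in E as [_ E]. inversion E; auto. }
    simpl in Hlen'. lia. }
  destruct Hfresh as [v' [Hv' Hnot]].
  exists ((p ++ [(i,u)], p' ++ [(i,v')]) :: H).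
  split; [|split; [intros x Hx; right; auto|split; [simpl; lia| eexists; left; eauto]]].
  assert (Hnx : forall x, In (p ++ [(i,u)], x) H -> False) by eauto.
  assert (Hny : forall x, In (x, p' ++ [(i,v')]) H -> False) by eauto.
  split; [|split; [|split; [|split; [|split]]]].
  - right; auto.
  - intros a b1 b2 [E1|E1] [E2|E2]; try (inversion E1; inversion E2; subst; congruence);
      [inversion E1; subst; exfalso; eauto| inversion E2; subst; exfalso; eauto| eauto].
  - intros a1 a2 b [E1|E1] [E2|E2]; try (inversion E1; inversion E2; subst; congruence);
      [inversion E1; subst; exfalso; eauto| inversion E2; subst; exfalso; eauto| eauto].
  - intros a j x b [E1|E1].
    + inversion E1; subst. apply app_inj_tail in H2 as [-> E]. inversion E; subst.
      exists p', v'; split; auto. right; auto.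
    + destruct (Hc1 _ _ _ _ E1) as [p0' [u0 [? ?]]]. exists p0', u0; split; auto. right; auto.
  - intros a b j x [E1|E1].
    + inversion E1; subst. apply app_inj_tail in H3 as [-> E]. inversion E; subst.
      exists p, u; split; auto. right; auto.
    + destruct (Hc2 _ _ _ _ E1) as [p0 [u0 [? ?]]]. exists p0, u0; split; auto. right; auto.
  - intros a b [E1|E1]; [|apply (Hd _ _ E1)]. inversion E1; subst.
    rewrite !length_app, !lastw_snoc. simpl.
    split; [lia|]. split; [lia|]. split; [apply validp_snoc; auto|]. split; [apply validp_snoc; auto|].
    replace (ell - (length p + 1)) with n by (unfold n; lia). apply Hall; auto.
Qed.

End Paths.

Inductive unode (I X : Type) : Type := UT : list (I * X) -> unode I X | UM : X -> unode I X.
Arguments UT {I X}. Arguments UM {I X}.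

Definition okU {I X} (ell : nat) (a : unode I X) : bool :=
  match a with UT p => length p <=? ell | UM _ => true end.

Lemma sig_eq {X} (P : X -> bool) (a b : {x | P x = true}) : proj1_sig a = proj1_sig b -> a = b.
Proof.
  destruct a as [a ha], b as [b hb]; simpl; intros ->. f_equal. apply UIP_dec. apply bool_dec.
Qed.

Definition sig_of_aux {X} (P : X -> bool) (x : X) (b : bool) : P x = b -> option {x | P x = true} :=
  match b with true => fun h => Some (exist _ x h) | false => fun _ => None end.
Definition sig_of {X} (P : X -> bool) (x : X) : option {x | P x = true} := sig_of_aux P x (P x) eq_refl.

Lemma sig_of_aux_spec {X} (P : X -> bool) x b (e : P x = b) : P x = true ->
  exists y, sig_of_aux P x b e = Some y /\ proj1_sig y = x.
Proof. destruct b; simpl; intros; [eexists; split; eauto| congruence]. Qed.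
Lemma sig_of_spec {X} (P : X -> bool) x : P x = true -> exists y, sig_of P x = Some y /\ proj1_sig y = x.
Proof. apply sig_of_aux_spec. Qed.

Lemma sig_of_val {X} (P : X -> bool) (y : {x | P x = true}) : sig_of P (proj1_sig y) = Some y.
Proof.
  destruct (sig_of_spec P (proj1_sig y)) as [y' [E1 E2]]; [destruct y; auto|].
  rewrite E1. f_equal. apply sig_eq; auto.
Qed.

Lemma finite_sig {X} (P : X -> bool) (l : list X) : (forall x, P x = true -> In x l) ->
  finite_type {x | P x = true}.
Proof.
  intros Hl. exists (flat_map (fun x => match sig_of P x with Some y => [y] | None => [] end) l).
  intros y. apply in_flat_map. exists (proj1_sig y). split.
  - apply Hl. destruct y; auto.
  - rewrite sig_of_val. left; auto.
Qed.

Fixpoint lists_upto {X} (l : list X) (n : nat) : list (list X) :=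
  match n with 0 => [[]] | S n => [] :: flat_map (fun x => map (cons x) (lists_upto l n)) l end.

Lemma lists_upto_in {X} (l : list X) : (forall x, In x l) -> forall n p, length p <= n -> In p (lists_upto l n).
Proof.
  intros Hl n. induction n; intros p Hp; destruct p as [|x p]; simpl in *; auto; try lia.
  right. apply in_flat_map. exists x; split; auto. apply in_map. apply IHn; lia.
Qed.

Lemma finite_sum {A B} : finite_type A -> finite_type B -> finite_type (A + B).
Proof.
  intros [la Ha] [lb Hb]. exists (map inl la ++ map inr lb). intros [a|b]; apply in_or_app; [left|right]; apply in_map; auto.
Qed.
Lemma finite_prod {A B} : finite_type A -> finite_type B -> finite_type (A * B).
Proof. intros [la Ha] [lb Hb]. exists (list_prod la lb). intros [a b]. apply in_prod; auto. Qed.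

Lemma Forall2_map_r {X Y} (R : X -> Y -> Prop) (f : X -> Y) l : (forall x, In x l -> R x (f x)) -> Forall2 R l (map f l).
Proof. induction l; simpl; intros; constructor; auto. Qed.
Lemma Forall2_map_l {X Y} (R : X -> Y -> Prop) (f : Y -> X) l : (forall y, In y l -> R (f y) y) -> Forall2 R (map f l) l.
Proof. induction l; simpl; intros; constructor; auto. Qed.

Section Structs.
Context {I J : Type}.

Definition uedge (ell : nat) (M : kripke I J) (w : world M) (i : I) (a b : unode I (world M)) : Prop :=
  match a, b with
  | UT p, UT p2 => exists u, p2 = p ++ [(i,u)] /\ edge M i (lastw M w p) u
  | UT p, UM u => length p = ell /\ edge M i (lastw M w p) u
  | UM u, UM u2 => edge M i u u2
  | UM _, UT _ => False
  end.
Definition uprop (M : kripke I J) (w : world M) (j : J) (a : unode I (world M)) : Prop :=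
  match a with UT p => prop M j (lastw M w p) | UM u => prop M j u end.

Definition Ustr (ell : nat) (M : kripke I J) (w : world M) : kripke I J :=
  @Kripke I J {a : unode I (world M) | okU ell a = true}
    (inhabits (exist _ (UT []) eq_refl))
    (fun i a b => uedge ell M w i (proj1_sig a) (proj1_sig b))
    (fun j a => uprop M w j (proj1_sig a)).

Definition Uroot ell M w : world (Ustr ell M w) := exist _ (UT []) eq_refl.

Definition kunion (N N' : kripke I J) : kripke I J :=
  @Kripke I J (world N + world N') (let (x) := world_inhabited N in inhabits (inl x))
   (fun i a b => match a, b with inl x, inl y => edge N i x y | inr x, inr y => edge N' i x y | _, _ => False end)
   (fun j a => match a with inl x => prop N j x | inr x => prop N' j x end).

Definition CI (K : nat) := {n : nat | (n <? S K) = true}.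
Definition c0 (K : nat) : CI K := exist _ 0 eq_refl.

Definition kcopies (K : nat) (N : kripke I J) : kripke I J :=
  @Kripke I J (CI K * world N) (let (x) := world_inhabited N in inhabits (c0 K, x))
   (fun i a b => fst a = fst b /\ edge N i (snd a) (snd b))
   (fun j a => prop N j (snd a)).

Definition toU ell M w (a : unode I (world M)) : world (Ustr ell M w) :=
  match sig_of (okU ell) a with Some y => y | None => Uroot ell M w end.
Lemma toU_val ell M w a : okU ell a = true -> proj1_sig (toU ell M w a) = a.
Proof.
  intros h. unfold toU. destruct (sig_of_spec (okU ell) a h) as [y [-> E]]; auto.
Qed.

Definition chf ell (M : kripke I J) (s : unode I (world M)) (i : I) (v : world M) : unode I (world M) :=
  match s with UT p => if length p <? ell then UT (p ++ [(i,v)]) else UM v | UM _ => UM v end.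
Definition backf (M : kripke I J) (w : world M) (s : unode I (world M)) : world M :=
  match s with UT p => lastw M w p | UM v => v end.
Definition ZU (M : kripke I J) (w : world M) (u : world M) (s : unode I (world M)) : Prop :=
  match s with UT p => validp M w p /\ lastw M w p = u | UM v => v = u end.

Lemma bisim_U ell M w : bisimilar M w (Ustr ell M w) (Uroot ell M w).
Proof.
  exists (fun u s => ZU M w u (proj1_sig s)). split; [|simpl; auto].
  split; [exists w, (Uroot ell M w); simpl; auto|].
  intros u [s Hs] Hz; simpl in Hz |- *. split; [|split].
  - intro j. destruct s; simpl in *; [destruct Hz as [_ ->]| subst]; tauto.
  - intros i vs _ [Hnd Hsucc].
    assert (Hok : forall v, okU ell (chf ell M s i v) = true).
    { intros v; destruct s; simpl; auto. destruct (length l <? ell) eqn:E; simpl; auto.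
      apply Nat.ltb_lt in E. apply Nat.leb_le. rewrite length_app; simpl; lia. }
    exists (map (fun v => toU ell M w (chf ell M s i v)) vs). split; [split|].
    + apply NoDup_map_on; auto. intros a b _ _ E. apply (f_equal (@proj1_sig _ _)) in E.
      rewrite !toU_val in E by auto. destruct s; simpl in E; [destruct (length l <? ell)|];
        inversion E as [E']; auto; apply app_inj_tail in E' as [_ E'']; inversion E''; auto.
    + intros v Hv. apply in_map_iff in Hv as [x [<- Hx]]. simpl. rewrite toU_val by auto.
      specialize (Hsucc x Hx). destruct s; simpl in *.
      * destruct Hz as [_ Hl]. subst u. destruct (length l <? ell) eqn:E; simpl; eauto.
        split; auto. apply Nat.ltb_ge in E. rewrite Nat.leb_le in Hs. lia.
      * subst; auto.
    + apply Forall2_map_r. intros x Hx. simpl. rewrite toU_val by auto.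
      specialize (Hsucc x Hx). destruct s; simpl in *.
      * destruct Hz as [Hv Hl]. subst u. destruct (length l <? ell); simpl; auto.
        rewrite validp_snoc, lastw_snoc. auto.
      * auto.
  - intros i vs' _ [Hnd Hsucc].
    exists (map (fun s' => backf M w (proj1_sig s')) vs'). split; [split|].
    + apply NoDup_map_on; auto. intros [a ha] [b hb] Ha Hb E. apply sig_eq. simpl in *.

      pose proof (Hsucc (exist _ a ha) Ha) as Ea. pose proof (Hsucc (exist _ b hb) Hb) as Eb. simpl in *.
      destruct s, a, b; simpl in *; try tauto.
      * destruct Ea as [x [-> _]], Eb as [y [-> _]]. rewrite !lastw_snoc in E. subst; auto.
      * destruct Ea as [x [-> _]], Eb as [Eb1 _]. pose proof (proj1 (Nat.leb_le _ _) ha) as ha2. rename ha2 into hA. rewrite length_app in hA; simpl in hA. lia.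
      * destruct Eb as [x [-> _]], Ea as [Ea1 _]. pose proof (proj1 (Nat.leb_le _ _) hb) as hB. rewrite length_app in hB; simpl in hB. lia.
      * subst; auto.
      * subst; auto.
    + intros v Hv. apply in_map_iff in Hv as [[a ha] [<- Ha]]. pose proof (Hsucc _ Ha) as Ea. simpl in *.
      destruct s, a; simpl in *; try tauto.
      * destruct Hz as [_ <-]. destruct Ea as [x [-> E]]. rewrite lastw_snoc; auto.
      * destruct Hz as [_ <-]. tauto.
      * subst; auto.
    + apply Forall2_map_l. intros [a ha] Ha. pose proof (Hsucc _ Ha) as Ea. simpl in *.
      destruct s, a; simpl in *; try tauto; auto.
      destruct Hz as [Hv <-]. destruct Ea as [x [-> E]]. rewrite validp_snoc, lastw_snoc; auto.
Qed.

Lemma bisim_inl N N' x : bisimilar N x (kunion N N') (inl x).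
Proof.
  exists (fun y s => s = inl y). split; [|auto]. split; [exists x, (inl x); auto|].
  intros u s ->. split; [intro j; simpl; tauto|split].
  - intros i vs _ [Hnd Hs]. exists (map inl vs). split; [split|].
    + apply NoDup_map_on; auto. intros a b _ _ E; inversion E; auto.
    + intros v Hv. apply in_map_iff in Hv as [y [<- Hy]]. simpl; auto.
    + apply Forall2_map_r; auto.
  - intros i vs' _ [Hnd Hs].
    assert (Hl : forall s, In s vs' -> exists y, s = inl y).
    { intros [y|y] Hy; eauto. specialize (Hs _ Hy); simpl in Hs; tauto. }
    set (pr := fun s : world (kunion N N') => match s with inl y => y | inr _ => u end).
    exists (map pr vs'). split; [split|].
    + apply NoDup_map_on; auto. intros a b Ha Hb E.
      destruct (Hl a Ha) as [? ->], (Hl b Hb) as [? ->]. simpl in E; subst; auto.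
    + intros v Hv. apply in_map_iff in Hv as [s [<- Hs']]. destruct (Hl s Hs') as [y ->].
      apply (Hs _ Hs').
    + apply Forall2_map_l. intros s Hs'. destruct (Hl s Hs') as [y ->]; auto.
Qed.

Lemma bisim_inr N N' x : bisimilar N' x (kunion N N') (inr x).
Proof.
  exists (fun y s => s = inr y). split; [|auto]. split; [exists x, (inr x); auto|].
  intros u s ->. split; [intro j; simpl; tauto|split].
  - intros i vs _ [Hnd Hs]. exists (map inr vs). split; [split|].
    + apply NoDup_map_on; auto. intros a b _ _ E; inversion E; auto.
    + intros v Hv. apply in_map_iff in Hv as [y [<- Hy]]. simpl; auto.
    + apply Forall2_map_r; auto.
  - intros i vs' _ [Hnd Hs].
    assert (Hl : forall s, In s vs' -> exists y, s = inr y).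
    { intros [y|y] Hy; eauto. specialize (Hs _ Hy); simpl in Hs; tauto. }
    set (pr := fun s : world (kunion N N') => match s with inr y => y | inl _ => u end).
    exists (map pr vs'). split; [split|].
    + apply NoDup_map_on; auto. intros a b Ha Hb E.
      destruct (Hl a Ha) as [? ->], (Hl b Hb) as [? ->]. simpl in E; subst; auto.
    + intros v Hv. apply in_map_iff in Hv as [s [<- Hs']]. destruct (Hl s Hs') as [y ->].
      apply (Hs _ Hs').
    + apply Forall2_map_l. intros s Hs'. destruct (Hl s Hs') as [y ->]; auto.
Qed.

Lemma bisim_copy K N (c : CI K) x : bisimilar N x (kcopies K N) (c, x).
Proof.
  exists (fun y s => s = (c, y)). split; [|auto]. split; [exists x, (c, x); auto|].
  intros u s ->. split; [intro j; simpl; tauto|split].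
  - intros i vs _ [Hnd Hs]. exists (map (pair c) vs). split; [split|].
    + apply NoDup_map_on; auto. intros a b _ _ E; inversion E; auto.
    + intros v Hv. apply in_map_iff in Hv as [y [<- Hy]]. simpl; auto.
    + apply Forall2_map_r; auto.
  - intros i vs' _ [Hnd Hs].
    exists (map snd vs'). split; [split|].
    + apply NoDup_map_on; auto. intros [a1 a2] [b1 b2] Ha Hb E. simpl in E; subst.
      destruct (Hs _ Ha) as [Ea _], (Hs _ Hb) as [Eb _]. simpl in *; subst; auto.
    + intros v Hv. apply in_map_iff in Hv as [s [<- Hs']]. apply (Hs _ Hs').
    + apply Forall2_map_l. intros [a b] Hs'. destruct (Hs _ Hs') as [Ea _]. simpl in *; subst; auto.
Qed.

Lemma finite_U ell M w : finite_type I -> finite_type (world M) -> finite_type (world (Ustr ell M w)).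
Proof.
  intros [lI HI] [lW HW]. simpl.
  apply (finite_sig (okU ell) (map UT (lists_upto (list_prod lI lW) ell) ++ map UM lW)).
  intros [p|v] Hp; apply in_or_app; [left|right]; apply in_map; auto.
  apply lists_upto_in; [intros [i u]; apply in_prod; auto|]. simpl in Hp. apply Nat.leb_le; auto.
Qed.

Lemma finite_CI K : finite_type (CI K).
Proof. apply (finite_sig _ (seq 0 (S K))). intros x Hx. apply in_seq. apply Nat.ltb_lt in Hx. lia. Qed.

End Structs.

Section Core.
Context {I J : Type} (M M' : kripke I J) (w : world M) (w' : world M') (q : nat).

Definition ellq := 2 ^ q - 1.
Definition cq := 1 + q * 2 ^ q.
Definition Kq := S q.
Definition N0 := kunion (Ustr ellq M w) (Ustr ellq M' w').
Definition SS := kcopies Kq N0.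

Definition isA (x : world SS) (p : list (I * world M)) : Prop :=
  fst x = c0 Kq /\ exists a, snd x = inl a /\ proj1_sig a = UT p.
Definition isB (x : world SS) (p : list (I * world M')) : Prop :=
  fst x = c0 Kq /\ exists a, snd x = inr a /\ proj1_sig a = UT p.
Definition mkB (p : list (I * world M')) : world SS := (c0 Kq, inr (toU ellq M' w' (UT p))).

Definition isl (s : world N0) : bool := match s with inl _ => true | inr _ => false end.
Definition comp (x : world SS) : nat * bool := (proj1_sig (fst x), isl (snd x)).
Definition key (g g' : nat -> world SS) (x : nat) := (comp (g x), comp (g' x)).

Lemma mkB_isB p : length p <= ellq -> isB (mkB p) p.
Proof. intros h. split; auto. eexists; split; [reflexivity|]. apply toU_val. simpl. apply Nat.leb_le; auto. Qed.

Lemma isA_inj x y p : isA x p -> isA y p -> x = y.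
Proof.
  destruct x as [cx sx], y as [cy sy]. intros [E1 [a [E2 E3]]] [F1 [b [F2 F3]]]; simpl in *; subst.
  f_equal. f_equal. apply sig_eq. congruence.
Qed.
Lemma isB_inj x y p : isB x p -> isB y p -> x = y.
Proof.
  destruct x as [cx sx], y as [cy sy]. intros [E1 [a [E2 E3]]] [F1 [b [F2 F3]]]; simpl in *; subst.
  f_equal. f_equal. apply sig_eq. congruence.
Qed.
Lemma isA_fun x p1 p2 : isA x p1 -> isA x p2 -> p1 = p2.
Proof. intros [_ [a [E1 E2]]] [_ [b [F1 F2]]]. rewrite E1 in F1. inversion F1; subst. congruence. Qed.
Lemma isB_fun x p1 p2 : isB x p1 -> isB x p2 -> p1 = p2.
Proof. intros [_ [a [E1 E2]]] [_ [b [F1 F2]]]. rewrite E1 in F1. inversion F1; subst. congruence. Qed.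
Lemma isA_comp x p : isA x p -> comp x = (0, true).
Proof. intros [E [a [E2 _]]]. unfold comp. rewrite E, E2. auto. Qed.
Lemma isB_comp x p : isB x p -> comp x = (0, false).
Proof. intros [E [a [E2 _]]]. unfold comp. rewrite E, E2. auto. Qed.

Lemma edge_AA i x y p p2 : isA x p -> isA y p2 -> edge SS i x y <->
  exists u, p2 = p ++ [(i,u)] /\ edge M i (lastw M w p) u.
Proof.
  destruct x as [cx sx], y as [cy sy]. intros [E1 [a [E2 E3]]] [F1 [b [F2 F3]]]; simpl in *; subst.
  simpl. rewrite E3, F3. simpl. tauto.
Qed.
Lemma edge_BB i x y p p2 : isB x p -> isB y p2 -> edge SS i x y <->
  exists u, p2 = p ++ [(i,u)] /\ edge M' i (lastw M' w' p) u.
Proof.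
  destruct x as [cx sx], y as [cy sy]. intros [E1 [a [E2 E3]]] [F1 [b [F2 F3]]]; simpl in *; subst.
  simpl. rewrite E3, F3. simpl. tauto.
Qed.
Lemma edge_A_out i x y p : isA x p -> edge SS i x y ->
  (exists u, isA y (p ++ [(i,u)]) /\ edge M i (lastw M w p) u) \/ length p = ellq.
Proof.
  destruct x as [cx sx], y as [cy [b|b]]. intros [E1 [a [E2 E3]]] [F1 F2]; simpl in *; subst.
  - simpl in F2. rewrite E3 in F2. destruct (proj1_sig b) eqn:Eb; simpl in F2.
    + left. destruct F2 as [u [-> Hu]]. exists u; split; auto. split; auto. exists b; auto.
    + right; tauto.
  - intros [E1 [a [E2 E3]]] [F1 F2]; simpl in *; subst. simpl in F2. tauto.
Qed.
Lemma edge_A_in i x y p : isA x p -> edge SS i y x ->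
  exists p0 u, p = p0 ++ [(i,u)] /\ isA y p0.
Proof.
  destruct x as [cx sx], y as [cy [b|b]]. intros [E1 [a [E2 E3]]] [F1 F2]; simpl in *; subst.
  - simpl in F2. rewrite E3 in F2. destruct (proj1_sig b) eqn:Eb; simpl in F2; [|tauto].
    destruct F2 as [u [-> Hu]]. exists l, u; split; auto. split; auto. exists b; auto.
  - intros [E1 [a [E2 E3]]] [F1 F2]; simpl in *; subst. simpl in F2. tauto.
Qed.

Lemma walk_SS_inv x y m : walk SS x y m -> fst x = fst y /\ walk N0 (snd x) (snd y) m.
Proof.
  induction 1; [split; auto; constructor|]. destruct IHwalk as [E W].
  destruct H as [i [[F1 F2]|[F1 F2]]]; split; try congruence; econstructor; eauto; exists i; auto.
Qed.
Lemma walk_SS_lift cc s t m : walk N0 s t m -> walk SS (cc, s) (cc, t) m.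
Proof.
  induction 1; [constructor|]. econstructor; eauto.
  destruct H as [i [F|F]]; exists i; [left|right]; simpl; auto.
Qed.
Lemma walk_N0_side s t m : walk N0 s t m -> isl s = isl t.
Proof.
  induction 1; auto. rewrite <- IHwalk.
  destruct H as [i [F|F]]; destruct x, y; simpl in F; tauto.
Qed.
Lemma near_comp n x y : near SS n x y -> comp x = comp y.
Proof.
  intros [m [_ W]]. apply walk_SS_inv in W as [E W]. apply walk_N0_side in W.
  unfold comp; congruence.
Qed.

Lemma root_walk : forall x y m, walk SS x y m -> forall p p' H, isA x p -> Hvalid cq ellq M M' w w' H ->
  In (p,p') H -> length p + m <= ellq -> length H + m <= cq ->
  exists H' py py' y', Hvalid cq ellq M M' w w' H' /\ incl H H' /\ length H' <= length H + m /\
    isA y py /\ isB y' py' /\ In (py,py') H' /\ length py <= length p + m /\ walk SS (mkB p') y' m.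
Proof.
  induction 1 as [x|x x1 y n Hadj W IH]; intros p p' H HA Hv Hin Hlen Hc.
  - destruct (proj2 (proj2 (proj2 (proj2 (proj2 Hv)))) _ _ Hin) as [El [Hl _]].
    exists H, p, p', (mkB p'). split; [auto|]. split; [apply incl_refl|]. split; [lia|].
    split; [auto|]. split; [apply mkB_isB; lia|]. split; [auto|]. split; [lia| constructor].
  - pose proof Hv as [H0 [Hf [Hi [Hc1 [Hc2 Hd]]]]].
    destruct Hadj as [i [He|He]].
    + destruct (edge_A_out i x x1 p HA He) as [[u [HA1 Hu]]|Hl]; [|lia].
      destruct (ext_child cq ellq M M' w w' H p p' i u Hv Hin ltac:(lia) Hu ltac:(lia))
        as [H1 [Hv1 [Hinc1 [Hl1 [p2' Hin2]]]]].
      pose proof Hv1 as [_ [Hf1 [_ [Hc11 [_ Hd1]]]]].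
      destruct (Hc11 _ _ _ _ Hin2) as [p0' [u' [Ep Hin0]]].
      assert (p0' = p') by (eapply Hf1; eauto). subst p0'.
      destruct (IH _ _ _ HA1 Hv1 Hin2 ltac:(rewrite length_app; simpl; lia) ltac:(lia))
        as [H' [py [py' [y' [Hv' [Hinc [Hl' [HAy [HBy [Hiny [Hpy Wy]]]]]]]]]]].
      exists H', py, py', y'. split; [auto|]. split; [eapply incl_tran; eauto|]. split; [lia|].
      split; [auto|]. split; [auto|]. split; [auto|]. split; [rewrite length_app in Hpy; simpl in Hpy; lia|].
      destruct (Hd1 _ _ Hin2) as [E2 [Hlp [_ [Hvp _]]]].
      rewrite Ep in Hvp. apply validp_snoc in Hvp as [_ He'].
      subst p2'. econstructor; [|exact Wy]. exists i; left.
      destruct (Hd _ _ Hin) as [Ep0 [Hlp0 _]]. rewrite !length_app in E2, Hlp; simpl in E2, Hlp.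
      apply (edge_BB i _ _ p' (p' ++ [(i,u')])); [apply mkB_isB; lia| apply mkB_isB; rewrite length_app; simpl; lia|].
      eauto.
    + destruct (edge_A_in i x x1 p HA He) as [p0 [u [-> HA1]]].
      destruct (Hc1 _ _ _ _ Hin) as [p0' [u' [Ep Hin0]]].
      rewrite length_app in Hlen; simpl in Hlen.
      destruct (IH _ _ _ HA1 Hv Hin0 ltac:(lia) ltac:(lia))
        as [H' [py [py' [y' [Hv' [Hinc [Hl' [HAy [HBy [Hiny [Hpy Wy]]]]]]]]]]].
      exists H', py, py', y'. split; [auto|]. split; [auto|]. split; [lia|].
      split; [auto|]. split; [auto|]. split; [auto|]. split; [rewrite length_app; simpl; lia|].
      destruct (Hd _ _ Hin) as [E2 [Hl2 [_ [Hvp _]]]].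
      rewrite Ep in Hvp. apply validp_snoc in Hvp as [_ He'].
      econstructor; [|exact Wy]. exists i; right.
      subst p'. rewrite !length_app in E2; simpl in E2.
      apply (edge_BB i _ _ p0' (p0' ++ [(i,u')])); [apply mkB_isB; lia| apply mkB_isB; rewrite length_app; simpl; lia|].
      eauto.
Qed.

Definition Rel (k : nat) (L : list nat) (g g' : nat -> world SS) : Prop :=
  k <= q /\ length L + k <= q + 1 /\
  exists H, Hvalid cq ellq M M' w w' H /\ length H + k * 2 ^ q <= 1 + q * 2 ^ q /\
  (forall x, In x L -> (exists p p', isA (g x) p /\ isB (g' x) p' /\ In (p,p') H /\ length p + 2 ^ k <= 2 ^ q)
                      \/ snd (g x) = snd (g' x)) /\
  (forall x y, In x L -> In y L -> key g g' x <> key g g' y ->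
      ~ near SS (2 ^ k) (g x) (g y) /\ ~ near SS (2 ^ k) (g' x) (g' y)).

Lemma pow_pos k : 1 <= 2 ^ k.
Proof. induction k; simpl; lia. Qed.

Lemma Rel_atoms k L g g' : Rel k L g g' -> atoms_ok SS SS L g g'.
Proof.
  intros [Hk [HL [H [Hv [Hs [Hpeb Hsep]]]]]].
  pose proof Hv as [H0 [Hf [Hi [Hc1 [Hc2 Hd]]]]].
  pose proof (pow_pos k) as Hp.
  split.
  - intros x y Hx Hy.
    destruct (classic (key g g' x = key g g' y)) as [Ek|Nk].
    2:{ destruct (Hsep x y Hx Hy Nk) as [N1 N2]. split.
        - split; intro E; exfalso; [apply N1|apply N2]; rewrite E; apply near_refl.
        - intro i; split; intro E; exfalso; [apply N1|apply N2]; eapply near_edge; eauto. }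
    destruct (Hpeb x Hx) as [[px [px' [HAx [HBx [Hinx _]]]]]|Fx];
    destruct (Hpeb y Hy) as [[py [py' [HAy [HBy [Hiny _]]]]]|Fy].
    + split.
      * split; intro E.
        -- rewrite E in HAx. assert (px = py) by (eapply isA_fun; eauto). subst py.
           assert (px' = py') by (eapply Hf; eauto). subst py'. eapply isB_inj; eauto.
        -- rewrite E in HBx. assert (px' = py') by (eapply isB_fun; eauto). subst py'.
           assert (px = py) by (eapply Hi; eauto). subst py. eapply isA_inj; eauto.
      * intro i. rewrite (edge_AA i _ _ px py HAx HAy), (edge_BB i _ _ px' py' HBx HBy). split.
        -- intros [u [-> Hu]]. destruct (Hc1 _ _ _ _ Hiny) as [p0' [u' [-> Hin0]]].
           assert (p0' = px') by (eapply Hf; eauto). subst p0'.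
           exists u'; split; auto. destruct (Hd _ _ Hiny) as [_ [_ [_ [Hvp _]]]].
           apply validp_snoc in Hvp; tauto.
        -- intros [u' [-> Hu']]. destruct (Hc2 _ _ _ _ Hiny) as [p0 [u [-> Hin0]]].
           assert (p0 = px) by (eapply Hi; eauto). subst p0.
           exists u; split; auto. destruct (Hd _ _ Hiny) as [_ [_ [Hvp _]]].
           apply validp_snoc in Hvp; tauto.
    + exfalso. unfold key in Ek. rewrite (isA_comp _ _ HAx), (isB_comp _ _ HBx) in Ek.
      unfold comp in Ek. rewrite Fy in Ek. inversion Ek. congruence.
    + exfalso. unfold key in Ek. rewrite (isA_comp _ _ HAy), (isB_comp _ _ HBy) in Ek.
      unfold comp in Ek. rewrite Fx in Ek. inversion Ek. congruence.
    + unfold key, comp in Ek. inversion Ek as [[E1 E2 E3 E4]].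
      assert (F1 : fst (g x) = fst (g y)) by (apply sig_eq; auto).
      assert (F2 : fst (g' x) = fst (g' y)) by (apply sig_eq; auto).
      destruct (g x) as [a1 s1], (g y) as [a2 s2], (g' x) as [b1 t1], (g' y) as [b2 t2].
      simpl in *. subst. split.
      * split; intro E; inversion E; subst; auto.
      * intro i; simpl; tauto.
  - intros x Hx j. destruct (Hpeb x Hx) as [[px [px' [HAx [HBx [Hinx _]]]]]|Fx].
    + destruct (Hd _ _ Hinx) as [_ [_ [_ [_ HW]]]]. apply II_atom in HW.
      destruct HAx as [_ [a [Ea Pa]]], HBx as [_ [b [Eb Pb]]].
      change (prop N0 j (snd (g x)) <-> prop N0 j (snd (g' x))). rewrite Ea, Eb. simpl. rewrite Pa, Pb. simpl. apply HW.
    + change (prop N0 j (snd (g x)) <-> prop N0 j (snd (g' x))). rewrite Fx. tauto.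
Qed.

Lemma in_upd_cases {W} (g : nat -> W) z a x : upd g z a x = if Nat.eqb x z then a else g x.
Proof. reflexivity. Qed.

Lemma sep_upd k' L g g' z a b :
  (forall x y, In x L -> In y L -> key g g' x <> key g g' y ->
      ~ near SS (2 ^ S k') (g x) (g y) /\ ~ near SS (2 ^ S k') (g' x) (g' y)) ->
  (forall x, In x L -> x <> z -> (comp (g x), comp (g' x)) <> (comp a, comp b) ->
      ~ near SS (2 ^ k') a (g x) /\ ~ near SS (2 ^ k') b (g' x)) ->
  forall x y, In x (z :: L) -> In y (z :: L) -> key (upd g z a) (upd g' z b) x <> key (upd g z a) (upd g' z b) y ->
      ~ near SS (2 ^ k') (upd g z a x) (upd g z a y) /\ ~ near SS (2 ^ k') (upd g' z b x) (upd g' z b y).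
Proof.
  intros Hold Hnew x y Hx Hy Nk. unfold key, upd in *.
  assert (Hm : forall u v, near SS (2 ^ k') u v -> near SS (2 ^ S k') u v)
    by (intros; eapply near_mono; [|eauto]; simpl; lia).
  destruct (Nat.eqb_spec x z), (Nat.eqb_spec y z); subst.
  - congruence.
  - destruct Hy as [->|Hy]; [congruence|].
    destruct (Hnew y Hy n (fun E => Nk (eq_sym E))) as [N1 N2].
    split; intro Hn; [apply N1|apply N2]; auto.
  - destruct Hx as [->|Hx]; [congruence|].
    destruct (Hnew x Hx n Nk) as [N1 N2].
    split; intro Hn; [apply N1|apply N2]; apply near_sym; auto.
  - destruct Hx as [->|Hx]; [congruence|]. destruct Hy as [->|Hy]; [congruence|].
    destruct (Hold x y Hx Hy Nk) as [N1 N2]. split; intro Hn; [apply N1|apply N2]; auto.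
Qed.

Lemma fresh_copy (l : list nat) : length l < S Kq -> exists n, n < S Kq /\ ~ In n l.
Proof.
  intros Hl. apply NNPP; intro Hno.
  assert (S Kq <= length l).
  { replace (S Kq) with (length (seq 0 (S Kq))) by apply length_seq.
    apply (pigeon (fun n m => n = m)); auto.
    - apply seq_NoDup.
    - intros x Hx. apply in_seq in Hx. exists x; split; auto. apply NNPP; intro Hn. apply Hno. exists x; split; [lia|auto].
    - intros; subst; auto. }
  lia.
Qed.

Lemma Rel_forth k' L g g' : Rel (S k') L g g' -> forall z a, exists b, Rel k' (z :: L) (upd g z a) (upd g' z b).
Proof.
  intros [Hk [HL [H [Hv [Hs [Hpeb Hsep]]]]]] z a.
  pose proof (pow_pos k') as Hp1.
  assert (E2 : 2 ^ S k' = 2 ^ k' + 2 ^ k') by (simpl; lia).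
  assert (Hpq : 2 ^ k' <= 2 ^ q) by (apply Nat.pow_le_mono_r; lia).
  assert (Hsk : S k' * 2 ^ q = 2 ^ q + k' * 2 ^ q) by (simpl; lia).
  unfold ellq, cq in *.
  assert (Fin : forall H' b, Hvalid cq ellq M M' w w' H' -> incl H H' -> length H' <= length H + 2 ^ q ->
     ((exists p p', isA a p /\ isB b p' /\ In (p,p') H' /\ length p + 2 ^ k' <= 2 ^ q) \/ snd a = snd b) ->
     (forall x, In x L -> x <> z -> (comp (g x), comp (g' x)) <> (comp a, comp b) ->
        ~ near SS (2 ^ k') a (g x) /\ ~ near SS (2 ^ k') b (g' x)) ->
     Rel k' (z :: L) (upd g z a) (upd g' z b)).
  { intros H' b Hv' Hinc Hl' Hnewp Hnews.
    split; [lia|]. split; [simpl; lia|]. exists H'. split; auto. split; [lia|]. split.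
    - intros x Hx. unfold upd. destruct (Nat.eqb_spec x z); auto.
      destruct Hx as [->|Hx]; [congruence|].
      destruct (Hpeb x Hx) as [[p [p' [? [? [? ?]]]]]|?]; auto.
      left; exists p, p'; split; [auto|split; [auto|split; [auto|lia]]].
    - apply sep_upd; auto. }
  destruct (classic (exists y, In y L /\ near SS (2 ^ k') (g y) a)) as [[y [Hy Hn]]|Hno].
  -
    assert (Gen : forall b, near SS (2 ^ k') (g' y) b -> comp a = comp (g y) -> comp b = comp (g' y) ->
        forall x, In x L -> x <> z -> (comp (g x), comp (g' x)) <> (comp a, comp b) ->
        ~ near SS (2 ^ k') a (g x) /\ ~ near SS (2 ^ k') b (g' x)).
    { intros b Hnb Ca Cb x Hx _ Nk. rewrite Ca, Cb in Nk.
      destruct (Hsep y x Hy Hx (fun E => Nk (eq_sym E))) as [N1 N2]. rewrite E2 in N1, N2.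
      split; intro Hn'; [apply N1|apply N2]; eapply near_trans; eauto. }
    destruct (Hpeb y Hy) as [[p [p' [HAy [HBy [Hin Hlp]]]]]|Fy].
    + destruct Hn as [m [Hm W]].
      destruct (root_walk _ _ _ W p p' H HAy Hv Hin ltac:(unfold ellq; lia) ltac:(unfold cq; lia))
        as [H' [py [py' [b [Hv' [Hinc [Hl' [HAa [HBb [Hinb [Hpy Wb]]]]]]]]]]].
      assert (EB : g' y = mkB p').
      { eapply isB_inj; eauto. apply mkB_isB. pose proof Hv as [_ [_ [_ [_ [_ Hd]]]]].
        destruct (Hd _ _ Hin) as [E [Hl _]]. unfold ellq in *. lia. }
      exists b. apply (Fin H' b); auto; try lia.
      * left. exists py, py'. split; [auto|split; [auto|split; [auto|lia]]].
      * apply Gen.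
        -- rewrite EB. exists m; split; auto.
        -- rewrite (isA_comp _ _ HAa), (isA_comp _ _ HAy); auto.
        -- rewrite (isB_comp _ _ HBb), (isB_comp _ _ HBy); auto.
    + destruct Hn as [m [Hm W]]. pose proof (walk_SS_inv _ _ _ W) as [Ef Wn].
      exists (fst (g' y), snd a). apply (Fin H); auto; try lia.
      * apply incl_refl.
      * apply Gen.
        -- exists m; split; auto. rewrite (surjective_pairing (g' y)) at 1. rewrite <- Fy.
           apply walk_SS_lift; auto.
        -- apply near_comp with (n := 2 ^ k'). apply near_sym. exists m; auto.
        -- unfold comp. change (snd (fst (g' y), snd a)) with (snd a).
           change (fst (fst (g' y), snd a)) with (fst (g' y)). rewrite <- Fy. f_equal.
           symmetry. eapply walk_N0_side; eauto.
  -
    destruct (fresh_copy (map (fun x => proj1_sig (fst (g' x))) L)) as [n [Hn Hnin]].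
    { rewrite length_map. unfold Kq. lia. }
    assert (Hok : (n <? S Kq) = true) by (apply Nat.ltb_lt; auto).
    set (ci := exist (fun n => (n <? S Kq) = true) n Hok : CI Kq).
    exists (ci, snd a). apply (Fin H); auto; try lia.
    + apply incl_refl.
    + intros x Hx _ _. split.
      * intro Hn'. apply Hno. exists x; split; auto. apply near_sym; auto.
      * intros [m [_ W]]. apply walk_SS_inv in W as [Ef _]. apply Hnin.
        apply in_map_iff. exists x; split; auto. rewrite <- Ef. reflexivity.
Qed.

End Core.

Section Swap.
Context {I J : Type}.

Definition sflip {K : nat} {A B : kripke I J} (x : world (kcopies K (kunion A B))) : world (kcopies K (kunion B A)) :=
  (fst x, match snd x with inl a => inr a | inr b => inl b end).

Lemma sflip_inv K A B (x : world (kcopies K (kunion A B))) : sflip (sflip x) = x.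
Proof. destruct x as [c [a|b]]; reflexivity. Qed.

Lemma sflip_edge K A B i (x y : world (kcopies K (kunion A B))) :
  edge _ i x y -> edge _ i (sflip x) (sflip y).
Proof. destruct x as [c [a|a]], y as [d [b|b]]; simpl; tauto. Qed.

Lemma walk_sflip K A B (x y : world (kcopies K (kunion A B))) m :
  walk _ x y m -> walk _ (sflip x) (sflip y) m.
Proof.
  induction 1; [constructor|]. econstructor; eauto.
  destruct H as [i [E|E]]; exists i; [left|right]; apply sflip_edge; auto.
Qed.

Lemma near_sflip K A B (x y : world (kcopies K (kunion A B))) n :
  near _ n (sflip x) (sflip y) -> near _ n x y.
Proof.
  intros [m [Hm W]]. exists m; split; auto. apply walk_sflip in W. rewrite !sflip_inv in W. auto.
Qed.

End Swap.

Section Final.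
Context {I J : Type}.

Lemma comp_sflip (M M' : kripke I J) w w' q (x : world (SS M M' w w' q)) :
  comp M' M w' w q (sflip x) = (fst (comp M M' w w' q x), negb (snd (comp M M' w w' q x))).
Proof. destruct x as [c [a|a]]; reflexivity. Qed.

Lemma Rel_swap (M M' : kripke I J) w w' q k L g g' :
  Rel M M' w w' q k L g g' -> Rel M' M w' w q k L (fun x => sflip (g' x)) (fun x => sflip (g x)).
Proof.
  intros [Hk [HL [H [Hv [Hs [Hpeb Hsep]]]]]].
  split; auto. split; auto. exists (map swp H). split; [apply Hvalid_swap; auto|].
  split; [rewrite length_map; auto|]. split.
  - intros x Hx. destruct (Hpeb x Hx) as [[p [p' [[A1 [a [A2 A3]]] [[B1 [b [B2 B3]]] [Hin Hl]]]]]|F].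
    + left. exists p', p. split; [|split; [|split]].
      * split; [exact B1|]. exists b. destruct (g' x) as [cc ss]; simpl in B2 |- *; subst ss; auto.
      * split; [exact A1|]. exists a. destruct (g x) as [cc ss]; simpl in A2 |- *; subst ss; auto.
      * apply in_swp; auto.
      * pose proof Hv as [_ [_ [_ [_ [_ Hd]]]]]. destruct (Hd _ _ Hin) as [E _]. lia.
    + right. destruct (g x) as [c1 s1], (g' x) as [c2 s2]; simpl in F |- *; subst; auto.
  - intros x y Hx Hy Nk. unfold key in Nk. rewrite !comp_sflip in Nk.
    assert (Nk' : key M M' w w' q g g' x <> key M M' w w' q g g' y).
    { intro E; apply Nk. unfold key in E. pose proof (f_equal fst E) as E1. pose proof (f_equal snd E) as E2. simpl in E1, E2. rewrite E1, E2. auto. }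
    destruct (Hsep x y Hx Hy Nk') as [N1 N2]. split; intro Hn; [apply N2|apply N1]; eapply near_sflip; eauto.
Qed.

Lemma upd_map {A B : Type} (f : A -> B) (g : nat -> A) z a :
  (fun x => f (upd g z a x)) = upd (fun x => f (g x)) z (f a).
Proof. apply functional_extensionality; intro x; unfold upd; destruct (Nat.eqb x z); auto. Qed.

Lemma Rel_EF (M M' : kripke I J) w w' q : EFrel (SS M M' w w' q) (SS M M' w w' q) (Rel M M' w w' q).
Proof.
  intros k L g g' HR. split; [eapply Rel_atoms; eauto|]. intros k' ->. split.
  - apply Rel_forth; auto.
  - intros z b. apply Rel_swap in HR.
    destruct (Rel_forth M' M w' w q k' L _ _ HR z (sflip b)) as [b0 Hb0].
    exists (sflip b0). apply Rel_swap in Hb0.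
    rewrite !upd_map in Hb0. rewrite sflip_inv in Hb0.
    replace (fun x => sflip (sflip (g x))) with g in Hb0 by (apply functional_extensionality; intro; rewrite sflip_inv; auto).
    replace (fun x => sflip (sflip (g' x))) with g' in Hb0 by (apply functional_extensionality; intro; rewrite sflip_inv; auto).
    exact Hb0.
Qed.

Definition rA (M M' : kripke I J) w w' q : world (SS M M' w w' q) := (c0 (Kq q), inl (Uroot (ellq q) M w)).
Definition rB (M M' : kripke I J) w w' q : world (SS M M' w w' q) := (c0 (Kq q), inr (Uroot (ellq q) M' w')).

Lemma Rel_init (M M' : kripke I J) w w' q : II_wins (cq q) (ellq q) M M' w w' ->
  Rel M M' w w' q q [0] (fun _ => rA M M' w w' q) (fun _ => rB M M' w w' q).
Proof.
  intros HW. split; [lia|]. split; [simpl; lia|]. exists [([],[])]. split; [|split; [simpl; lia|split]].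
  - split; [left; auto|]. split; [intros p p1 p2 [E1|[]] [E2|[]]; congruence|].
    split; [intros p1 p2 p' [E1|[]] [E2|[]]; congruence|].
    split; [intros p i u p' [E|[]]; inversion E as [E']; exfalso; eapply app_cons_not_nil; eauto|].
    split; [intros p p' i u' [E|[]]; inversion E as [[E1 E']]; exfalso; eapply app_cons_not_nil; eauto|].
    intros p p' [E|[]]; inversion E; subst. simpl. split; [auto|]. split; [lia|]. split; [auto|]. split; [auto|].
    rewrite Nat.sub_0_r. auto.
  - intros x [<-|[]]. left. exists [], []. split; [|split; [|split]].
    + split; auto. exists (Uroot (ellq q) M w); auto.
    + split; auto. exists (Uroot (ellq q) M' w'); auto.
    + left; auto.
    + simpl; lia.
  - intros x y [<-|[]] [<-|[]] N. congruence.
Qed.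

Lemma bisim_rA (M M' : kripke I J) w w' q : bisimilar M w (SS M M' w w' q) (rA M M' w w' q).
Proof.
  apply (bisim_trans M (Ustr (ellq q) M w) _ w (Uroot (ellq q) M w)); [apply bisim_U|].
  apply (bisim_trans _ (N0 M M' w w' q) _ _ (inl (Uroot (ellq q) M w))); [apply bisim_inl|]. exact (bisim_copy _ _ _ _).
Qed.
Lemma bisim_rB (M M' : kripke I J) w w' q : bisimilar M' w' (SS M M' w w' q) (rB M M' w w' q).
Proof.
  apply (bisim_trans M' (Ustr (ellq q) M' w') _ w' (Uroot (ellq q) M' w')); [apply bisim_U|].
  apply (bisim_trans _ (N0 M M' w w' q) _ _ (inr (Uroot (ellq q) M' w'))); [apply bisim_inr|]. exact (bisim_copy _ _ _ _).
Qed.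

Lemma SS_finite (M M' : kripke I J) w w' q : finite_type I -> finite_kripke M -> finite_kripke M' ->
  finite_kripke (SS M M' w w' q).
Proof.
  intros HI HM HM'. unfold finite_kripke.
  change (finite_type (CI (Kq q) * (world (Ustr (ellq q) M w) + world (Ustr (ellq q) M' w')))).
  apply finite_prod; [apply finite_CI|].
  apply finite_sum; [apply (finite_U (ellq q) M w)|apply (finite_U (ellq q) M' w')]; auto.
Qed.

Lemma key_result (K : kripke I J -> Prop) (phi : fo I J) q :
  finite_type I -> one_free_var phi -> qrank phi = q ->
  (forall M M' w w', K M -> K M' -> K (SS M M' w w' q)) ->
  invariant_bisim K phi -> invariant_game K (cq q) (2 ^ q - 1) phi.
Proof.
  intros HI Hfv Hq HK Hinv M M' w w' KM KM' Hg.
  unfold game_equiv in Hg. change (2 ^ q - 1) with (ellq q) in Hg.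
  pose proof (Rel_init M M' w w' q Hg) as HR.
  assert (E : holds_at _ (rA M M' w w' q) phi <-> holds_at _ (rB M M' w w' q) phi).
  { unfold holds_at. eapply EF_sound; [apply Rel_EF| exact HR| |lia].
    eapply fv_mono; [|exact Hfv]. intros y ->; left; auto. }
  rewrite (Hinv M (SS M M' w w' q) w (rA M M' w w' q) KM (HK _ _ _ _ KM KM') (bisim_rA _ _ _ _ _)).
  rewrite E.
  rewrite <- (Hinv M' (SS M M' w w' q) w' (rB M M' w w' q) KM' (HK _ _ _ _ KM KM') (bisim_rB _ _ _ _ _)).
  tauto.
Qed.

End Final.

Theorem mainTheorem9 (I J : Type) (HI : finite_type I) (HJ : finite_type J)
  (phi : fo I J) (q : nat) (Hfv : one_free_var phi) (Hq : qrank phi = q) :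
  (invariant_bisim (fun _ => True) phi ->
     exists c : nat, invariant_game (fun _ => True) c (2 ^ q - 1) phi) /\
  (invariant_bisim (@finite_kripke I J) phi ->
     exists c : nat, invariant_game (@finite_kripke I J) c (2 ^ q - 1) phi).
Proof.
  split; intros Hinv; exists (cq q); apply key_result; auto.
  intros M M' w w' HM HM'. apply SS_finite; auto.
Qed.
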